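(* Let $N,S\ge 1$ and $d\ge 2$ be integers, and let $\pi$ be a next-token distribution on $[N]^S$ such that for every $t_{1:S}\in[N]^S$ there exists $t_{S+1}\in[N]$ with $\pi(t_{S+1}\mid t_{1:S})=1$ (i.e. all conditional distributions have zero entropy). Then $d_{KL}(\pi,\mathcal{L}(N,S,d))=0$.
   Context: $[N]=\{1,\dots,N\}$. A next-token distribution $\pi$ consists of a prior probability distribution on $[N]^S$ together with, for each $t_{1:S}\in[N]^S$, a conditional probability distribution $\pi_{t_{1:S}}=\pi(\cdot\mid t_{1:S})$ on $[N]$. For $f:[N]^S\to\mathbb{R}^N$, $d_{KL}(\pi,f):=\mathbb{E}_{t_{1:S}\sim\pi}\big[\mathrm{KL}(\pi_{t_{1:S}}\,\|\,\mathrm{Softmax}(f(t_{1:S})))\big]$. The set of sequence encoders is $\mathcal{L}(N,S,d):=\{f_{W,E}: W\in\mathbb{R}^{N\times d},\ E:[N]^S\to\mathbb{R}^d\}$ with $f_{W,E}(t_{1:S})=W E(t_{1:S})$, and $d_{KL}(\pi,\mathcal{L}(N,S,d)):=\inf_{f\in\mathcal{L}(N,S,d)}d_{KL}(\pi,f)$. *)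

(* Defs.v *)
From HB Require Import structures.
From mathcomp Require Import all_boot all_order all_algebra.
From mathcomp Require Import all_classical all_reals all_analysis.
Set Implicit Arguments. Unset Strict Implicit. Unset Printing Implicit Defensive.
Import Order.TTheory GRing.Theory Num.Theory.
Local Open Scope ring_scope.

(* Contexts t_{1:S} in [N]^S; tokens [N] = 'I_N (index i stands for i+1). *)
Definition context (N S : nat) := {ffun 'I_S -> 'I_N}.

Definition is_next_token_dist (R : realType) (N S : nat)
    (prior : context N S -> R) (cond : context N S -> 'I_N -> R) : Prop :=
  (forall t, 0 <= prior t) /\ (\sum_t prior t = 1) /\
  (forall t i, 0 <= cond t i) /\ (forall t, \sum_i cond t i = 1).

Definition softmax (R : realType) (N : nat) (v : 'cV[R]_N) (i : 'I_N) : R :=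
  expR (v i 0) / \sum_(j < N) expR (v j 0).

Definition KL (R : realType) (N : nat) (p q : 'I_N -> R) : R :=
  \sum_(i < N) (if p i == 0 then 0 else p i * ln (p i / q i)).

Definition dKL (R : realType) (N S : nat)
    (prior : context N S -> R) (cond : context N S -> 'I_N -> R)
    (f : context N S -> 'cV[R]_N) : R :=
  \sum_t prior t * KL (cond t) (softmax (f t)).

Definition seq_encoders (R : realType) (N S d : nat) : set (context N S -> 'cV[R]_N) :=
  [set f | exists (W : 'M[R]_(N, d)) (E : context N S -> 'cV[R]_d),
             f = fun t => W *m E t].

Definition dKL_class (R : realType) (N S d : nat)
    (prior : context N S -> R) (cond : context N S -> 'I_N -> R) : R :=
  inf [set dKL prior cond f | f in @seq_encoders R N S d].

(* Main.v *)
Require Import Defs.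
From HB Require Import structures.
From mathcomp Require Import all_boot all_order all_algebra.
From mathcomp Require Import all_classical all_reals all_analysis.
From mathcomp Require Import ring lra.
Import Order.TTheory GRing.Theory Num.Theory.
Local Open Scope ring_scope.

Section Aux.
Variables (R : realType) (N : nat).

Lemma KL_point (p : 'I_N -> R) (q : 'I_N -> R) (k : 'I_N) :
  (forall i, 0 <= p i) -> \sum_i p i = 1 -> p k = 1 ->
  KL p q = ln (1 / q k).
Proof.
move=> p0 p1 pk.
have rest0 : forall i, i != k -> p i = 0.
  have h : \sum_(i | i != k) p i = 0.
    by move: p1; rewrite (bigD1 k) //= pk => /(congr1 (fun z => z - 1)); rewrite addrC addrK subrr.
  by move=> i ik; apply: (psumr_eq0P _ h) => //.
rewrite /KL (bigD1 k) //= pk oner_eq0 mul1r big1 ?addr0 // => i ik.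
by rewrite rest0 // eqxx.
Qed.

Lemma inv_softmax (v : 'cV[R]_N) (k : 'I_N) :
  1 / softmax v k = \sum_j expR (v j 0 - v k 0).
Proof.
rewrite /softmax div1r invf_div mulr_suml.
by apply: eq_bigr => j _; rewrite expRB.
Qed.

Lemma sum_ge1 (v : 'cV[R]_N) (k : 'I_N) :
  1 <= \sum_j expR (v j 0 - v k 0).
Proof.
rewrite (bigD1 k) //= subrr expR0 lerDl.
by apply: sumr_ge0 => j _; apply/ltW/expR_gt0.
Qed.

Lemma sqr_ge1' (x : R) : 1 <= x -> 1 <= x ^+ 2.
Proof.
move=> h1; rewrite expr2; apply: (le_trans h1).
by rewrite ler_peMr // (le_trans ler01 h1).
Qed.

Lemma sqr_ge1 (a b : nat) : a != b -> 1 <= (a%:R - b%:R : R) ^+ 2.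
Proof.
case: (ltngtP a b) => // h _.
- rewrite -opprB sqrrN; apply: sqr_ge1'.
  by rewrite -natrB ?ler1n ?subn_gt0 //; apply: ltnW.
- apply: sqr_ge1'.
  by rewrite -natrB ?ler1n ?subn_gt0 //; apply: ltnW.
Qed.

Lemma sum_le (v : 'cV[R]_N) (k : 'I_N) (del : R) :
  0 <= del -> (forall j, j != k -> expR (v j 0 - v k 0) <= del) ->
  \sum_j expR (v j 0 - v k 0) <= 1 + N%:R * del.
Proof.
move=> d0 h; rewrite (bigD1 k) //= subrr expR0 lerD2l.
apply: (le_trans (ler_sum _ h)).
have -> : N%:R * del = \sum_(j < N) del by rewrite sumr_const card_ord mulr_natl.
by rewrite [X in _ <= X](bigD1 k) //= lerDr.
Qed.

Definition Wm d : 'M[R]_(N, d) := \matrix_(j, l)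
  (if (l : nat) == 0%N then (j : nat)%:R
   else if (l : nat) == 1%N then - ((j : nat)%:R ^+ 2) / 2 else 0).

Definition Ev d (c k : R) : 'cV[R]_d :=
  \col_l (c * (if (l : nat) == 0%N then k else if (l : nat) == 1%N then 1 else 0)).

Lemma WE_entry d' c k (j : 'I_N) :
  (Wm d'.+2 *m Ev d'.+2 c k) j 0 = c * ((j : nat)%:R * k - (j : nat)%:R ^+ 2 / 2).
Proof.
rewrite mxE !big_ord_recl big1 ?addr0 => [|i _]; rewrite !mxE /=; last by rewrite mul0r.
ring.
Qed.

End Aux.

Theorem proposition3 (R : realType) (N S d : nat)
    (prior : context N S -> R) (cond : context N S -> 'I_N -> R) :
  (1 <= N)%N -> (1 <= S)%N -> (2 <= d)%N ->
  is_next_token_dist prior cond ->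
  (forall t : context N S, exists i : 'I_N, cond t i = 1) ->
  @dKL_class R N S d prior cond = 0.
Proof.
case: d => [|[|d']] // N1 _ d2 [pr0 [pr1 [c0 c1]]] Hex.
have [kf Hk] := choice Hex.
have KLe : forall t v, KL (cond t) (softmax v) = ln (\sum_j expR (v j 0 - v (kf t) 0)).
  by move=> t v; rewrite (@KL_point R N (cond t) (softmax v) (kf t) (c0 t) (c1 t) (Hk t)) inv_softmax.
have KLge0 : forall t v, 0 <= KL (cond t) (softmax v).
  by move=> t v; rewrite KLe; apply: ln_ge0; apply: sum_ge1.
rewrite /dKL_class; set A := (X in inf X).
have A0 : lbound A 0.
  move=> x [f _ <-]; rewrite /dKL; apply: sumr_ge0 => t _.
  by apply: mulr_ge0.
have key : forall eps : R, 0 < eps -> exists x, A x /\ x <= eps / 2.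
  move=> eps eps0.
  set del := Num.min 1 (eps / (2 * N%:R)).
  have N0 : (0 : R) < N%:R by rewrite ltr0n.
  have del0 : 0 < del by rewrite lt_min ltr01 divr_gt0 // mulr_gt0.
  have del1 : del <= 1 by rewrite ge_min lexx.
  have Nd : N%:R * del <= eps / 2.
    apply: (le_trans (ler_wpM2l (ler0n _ _) (_ : del <= eps / (2 * N%:R)))).
      by rewrite ge_min lexx orbT.
    rewrite le_eqVlt; apply/orP; left; apply/eqP; field.
    by rewrite pnatr_eq0 -lt0n N1.
  have lnd : ln del <= 0 by apply: ln_le0.
  set c := -2 * ln del.
  pose f := fun t : context N S => @Wm R N d'.+2 *m @Ev R d'.+2 c (kf t : nat)%:R.
  exists (dKL prior cond f); split.
    by exists f => //; exists (@Wm R N d'.+2), (fun t => @Ev R d'.+2 c (kf t : nat)%:R).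
  have -> : eps / 2 = \sum_t prior t * (eps / 2) by rewrite -mulr_suml pr1 mul1r.
  apply: ler_sum => t _; apply: ler_wpM2l => //.
  rewrite KLe.
  have hs : \sum_j expR (f t j 0 - f t (kf t) 0) <= 1 + N%:R * del.
    apply: sum_le; first exact: ltW.
    move=> j jk; rewrite /f !WE_entry.
    rewrite -[X in _ <= X](@lnK _ del) ?posrE // ler_expR.
    have := @sqr_ge1 R j (kf t) jk; rewrite /c => hj.
    have -> : -2 * ln del * ((j : nat)%:R * (kf t : nat)%:R - (j : nat)%:R ^+ 2 / 2) -
      -2 * ln del * ((kf t : nat)%:R * (kf t : nat)%:R - (kf t : nat)%:R ^+ 2 / 2)
      = ln del * ((j : nat)%:R - (kf t : nat)%:R) ^+ 2 by field.
    rewrite -subr_le0 -{2}(mulr1 (ln del)) -mulrBr.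
    by apply: mulr_le0_ge0 => //; rewrite subr_ge0.
  have Spos : 0 < \sum_j expR (f t j 0 - f t (kf t) 0).
    exact: (lt_le_trans ltr01 (@sum_ge1 R N (f t) (kf t))).
  apply: (le_trans (_ : _ <= ln (1 + N%:R * del))).
    by rewrite ler_ln ?posrE // (lt_le_trans Spos hs).
  apply: (le_trans (le_ln1Dx _)) => //.
  apply: (lt_le_trans (_ : -1 < 0)); first by rewrite oppr_lt0.
  by apply: mulr_ge0 => //; apply: ltW.
have Ane : (A !=set0)%classic.
  by have [x [Ax _]] := key 1 ltr01; exists x.
have hl : has_lbound A by exists 0.
apply/eqP; rewrite eq_le; apply/andP; split; last exact: lb_le_inf.
rewrite leNgt; apply/negP => ipos.
have [x [Ax xle]] := key _ ipos.
have := ge_inf hl Ax.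
have : inf A / 2 < inf A by rewrite ltr_pdivrMr // ltr_pMr // ltr1n.
move=> h1 h2.
have := le_lt_trans (le_trans h2 xle) h1.
by rewrite ltxx.
Qed.
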